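(* Let $a:=f'(0)>0$ and let $x^*$ be the smallest positive root of $f$, or $x^*=\infty$ if $f(x)>0$ for all $x>0$. Define, for $x\in(0,x^* )$, $$G(x):=\int_0^x\Big(\frac1{f(u)}-\frac1{au}\Big)du+\frac1a\log x .$$ Then the integral is finite, $G$ is a continuous strictly increasing bijection from $(0,x^* )$ onto $\mathbb R$, and for every $x>0$ the limit $$H(x):=\lim_{t\to\infty}\phi_t\big(xe^{-at}\big)$$ exists, the convergence being uniform over $x$ in compact subsets of $(0,\infty)$, and $$H(x)=G^{-1}\Big(\tfrac1a\log x\Big).$$
   Context: $f:\mathbb R_+\to\mathbb R$ is twice continuously differentiable with bounded second derivative, $f(0)=0$, $a=f'(0)>0$, and $f$ satisfies $(y-x)(f(y)-f(x))\le a(y-x)^2$ for all $x,y\ge0$ (in particular $f(x)\le ax$ for $x\ge 0$). $\phi_t(x)$ denotes the flow of the ODE $\dot x_t=f(x_t)$, i.e. the value at time $t$ of the solution started at $x$. *)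

(* Defs.v *)
From Stdlib Require Import Reals Lra.
Open Scope R_scope.

(* (0, x^* ) : x^* is the smallest positive root of f (or +infinity).
   x lies in (0, x^* ) iff x > 0 and f has no root in (0, x]. *)
Definition below_xstar (f : R -> R) (x : R) : Prop :=
  0 < x /\ forall u, 0 < u <= x -> f u <> 0.

Definition improper_int0 (g : R -> R) (x I : R) : Prop :=
  forall eps, 0 < eps -> exists delta, 0 < delta /\
    forall e, 0 < e < delta ->
      exists pr : Riemann_integrable g e x, Rabs (RiemannInt pr - I) < eps.

(* phi is the (forward) flow of x' = f(x) on R_+ :
   phi t x is the value at time t >= 0 of the solution started at x >= 0. *)
Definition is_flow (f : R -> R) (phi : R -> R -> R) : Prop :=
  forall x, 0 <= x ->
    phi 0 x = x /\
    (forall eps, 0 < eps -> exists delta, 0 < delta /\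
       forall s, 0 <= s < delta -> Rabs (phi s x - x) < eps) /\
    (forall t, 0 < t -> derivable_pt_lim (fun s => phi s x) t (f (phi t x))).

(* Main.v *)
Require Import Defs.
From Stdlib Require Import Reals Lra.
From Coquelicot Require Import Coquelicot.
From Stdlib Require Import Classical ClassicalEpsilon.
Open Scope R_scope.
Open Scope R_scope.

Record HY (f f1 f2 : R -> R) : Prop := {
  hf1 : forall x, derivable_pt_lim f x (f1 x);
  hf2 : forall x, derivable_pt_lim f1 x (f2 x);
  hf2c : continuity f2;
  hM : exists M, forall x, 0 <= x -> Rabs (f2 x) <= M;
  hf0 : f 0 = 0;
  ha : 0 < f1 0;
  hmon : forall x y, 0 <= x -> 0 <= y ->
            (y - x) * (f y - f x) <= f1 0 * (y - x) ^ 2 }.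

Lemma cpt_eps (g : R -> R) x :
  (forall eps, 0 < eps -> exists d, 0 < d /\ forall y, Rabs (y - x) < d -> Rabs (g y - g x) < eps) ->
  continuity_pt g x.
Proof.
  intros H eps Heps. destruct (H eps Heps) as [d [Hd Hy]].
  exists d; split; auto. intros y [_ Hy']. apply Hy. exact Hy'.
Qed.

Lemma cpt_eps' (g : R -> R) x : continuity_pt g x ->
  forall eps, 0 < eps -> exists d, 0 < d /\ forall y, Rabs (y - x) < d -> Rabs (g y - g x) < eps.
Proof.
  intros H eps Heps. destruct (H eps Heps) as [d [Hd Hy]].
  exists d; split; auto. intros y Hyx.
  destruct (Req_dec y x) as [->|Hne].
  - unfold Rminus; rewrite Rplus_opp_r, Rabs_R0; auto.
  - apply (Hy y). split; [split; [exact I| auto] | exact Hyx].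
Qed.


Lemma f_cont f f1 f2 : HY f f1 f2 -> continuity f.
Proof. intros H x. apply derivable_continuous_pt. exists (f1 x). apply (hf1 _ _ _ H). Qed.

Lemma f1_cont f f1 f2 : HY f f1 f2 -> continuity f1.
Proof. intros H x. apply derivable_continuous_pt. exists (f2 x). apply (hf2 _ _ _ H). Qed.

Lemma f_le f f1 f2 : HY f f1 f2 -> forall y, 0 < y -> f y <= f1 0 * y.
Proof.
  intros H y Hy. pose proof (hmon _ _ _ H 0 y (Rle_refl 0) (Rlt_le _ _ Hy)) as Hm.
  rewrite (hf0 _ _ _ H) in Hm.
  replace ((y - 0) * (f y - 0)) with (y * f y) in Hm by ring.
  replace (f1 0 * (y - 0) ^ 2) with (y * (f1 0 * y)) in Hm by ring.
  apply Rmult_le_reg_l with y; auto.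
Qed.

Lemma f_near0 f f1 f2 : HY f f1 f2 ->
  exists d, 0 < d /\ forall u, 0 < u < d -> f1 0 / 2 * u < f u.
Proof.
  intros H. pose proof (ha _ _ _ H) as Ha.
  destruct (hf1 _ _ _ H 0 (f1 0 / 2)) as [d Hd]. lra.
  exists d; split. apply cond_pos.
  intros u [Hu1 Hu2]. specialize (Hd u).
  rewrite Rplus_0_l, (hf0 _ _ _ H), Rminus_0_r in Hd.
  assert (Hab : Rabs u < d) by (rewrite Rabs_right; lra).
  specialize (Hd ltac:(lra) Hab).
  apply Rabs_def2 in Hd. destruct Hd as [_ Hd].
  assert (f u / u > f1 0 / 2) by lra.
  apply (Rmult_gt_compat_r u) in H0; auto.
  unfold Rdiv in H0 at 1. rewrite Rmult_assoc, Rinv_l, Rmult_1_r in H0; lra.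
Qed.

Lemma D_small f f1 f2 : HY f f1 f2 ->
  exists d, 0 < d /\ forall u, 0 < u < d -> below_xstar f u /\ 0 < f u.
Proof.
  intros H. destruct (f_near0 _ _ _ H) as [d [Hd Hu]]. pose proof (ha _ _ _ H).
  exists d; split; auto. intros u Hu'. split.
  - split; [lra|]. intros v Hv. specialize (Hu v ltac:(lra)).
    assert (0 < f1 0 / 2 * v) by (apply Rmult_lt_0_compat; lra). lra.
  - specialize (Hu u Hu'). assert (0 < f1 0 / 2 * u) by (apply Rmult_lt_0_compat; lra). lra.
Qed.

Lemma D_pos f f1 f2 : HY f f1 f2 -> forall x, below_xstar f x -> 0 < f x.
Proof.
  intros H x [Hx Hr]. destruct (D_small _ _ _ H) as [d [Hd Hu]].
  set (u0 := Rmin x (d/2)).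
  assert (Hu0 : 0 < u0 <= x) by (unfold u0; split; [apply Rmin_glb_lt; lra | apply Rmin_l]).
  assert (Hfu0 : 0 < f u0).
  { apply Hu. split; [lra|]. unfold u0. pose proof (Rmin_r x (d/2)). lra. }
  destruct (Rlt_le_dec 0 (f x)) as [Hp|Hn]; auto. exfalso.
  destruct (Rle_lt_or_eq_dec _ _ Hn) as [Hn'|Hz]; [|apply (Hr x); lra].
  destruct (Rle_lt_or_eq_dec _ _ (proj2 Hu0)) as [Hlt|Heq]; [|rewrite Heq in Hfu0; lra].
  destruct (Ranalysis5.IVT_interv (fun u => - f u) u0 x) as [z [Hz1 Hz2]].
  - intros a0 _. apply continuity_pt_opp. apply (f_cont _ _ _ H).
  - exact Hlt.
  - lra.
  - lra.
  - apply (Hr z). lra. lra.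
Qed.

Lemma D_down f x y : below_xstar f x -> 0 < y <= x -> below_xstar f y.
Proof. intros [Hx Hr] Hy. split; [lra|]. intros u Hu. apply Hr. lra. Qed.

Lemma D_open f f1 f2 : HY f f1 f2 -> forall x, below_xstar f x ->
  exists e, 0 < e /\ below_xstar f (x + e).
Proof.
  intros H x Hx. pose proof (D_pos _ _ _ H x Hx) as Hfx.
  destruct (cpt_eps' _ _ (f_cont _ _ _ H x) (f x) Hfx) as [d [Hd Hy]].
  exists (d/2). split; [lra|]. destruct Hx as [Hx0 Hr]. split; [lra|].
  intros u Hu. destruct (Rle_lt_dec u x) as [Hle|Hgt].
  - apply Hr; lra.
  - assert (Rabs (u - x) < d) by (rewrite Rabs_right; lra).
    specialize (Hy u H0). apply Rabs_def2 in Hy. lra.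
Qed.

Lemma Derive_f f f1 t : (forall x, derivable_pt_lim f x (f1 x)) -> Derive (fun x => f x) t = f1 t.
Proof. intros H. apply is_derive_unique, is_derive_Reals, H. Qed.

Lemma taylor2 f f1 f2 : HY f f1 f2 -> forall u, 0 < u ->
  exists z, 0 < z < u /\ f u - f1 0 * u = f2 z * (u * u) / 2.
Proof.
  intros H u Hu. set (a := f1 0). set (C := (f u - a * u) / (u * u)).
  pose proof (hf1 _ _ _ H) as Hd1. pose proof (hf2 _ _ _ H) as Hd2.
  destruct (MVT_cor2 (fun t => f t - a*t - C*(t*t)) (fun t => f1 t - a - 2*C*t) 0 u Hu)
    as [xi [Hxi1 Hxi2]].
  { intros c _. apply is_derive_Reals. auto_derive.
    - exists (f1 c). apply is_derive_Reals, Hd1.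
    - rewrite (Derive_f f f1 c Hd1). ring. }
  rewrite (hf0 _ _ _ H) in Hxi1.
  assert (Hphi : f u - a * u - C * (u * u) = 0) by (unfold C; field; lra).
  assert (Hxi : f1 xi - a - 2 * C * xi = 0).
  { assert ((f1 xi - a - 2 * C * xi) * u = 0) by (rewrite Hphi in Hxi1; lra).
    apply Rmult_integral in H0. destruct H0; lra. }
  destruct (MVT_cor2 (fun t => f1 t - a - 2*C*t) (fun t => f2 t - 2*C) 0 xi (proj1 Hxi2))
    as [z [Hz1 Hz2]].
  { intros c _. apply is_derive_Reals. auto_derive.
    - exists (f2 c). apply is_derive_Reals, Hd2.
    - rewrite (Derive_f f1 f2 c Hd2). ring. }
  exists z. split; [lra|].
  rewrite Hxi in Hz1. fold a in Hz1.
  assert (Hz : f2 z - 2 * C = 0).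
  { assert ((f2 z - 2 * C) * xi = 0) by lra.
    apply Rmult_integral in H0. destruct H0; lra. }
  assert (f u - a * u = C * (u * u)) by (unfold C; field; lra).
  rewrite H0. replace C with (f2 z / 2) by lra. field.
Qed.

Definition K1 f f1 (u : R) := if Rle_dec u 0 then f1 0 else f u / u.
Definition K2 f f1 f2 (u : R) := if Rle_dec u 0 then f2 0 / 2 else (f u - f1 0 * u) / (u * u).
Definition gt f f1 f2 (u : R) := - K2 f f1 f2 u / (f1 0 * K1 f f1 u).

Lemma K1_cont0 f f1 f2 : HY f f1 f2 -> continuity_pt (K1 f f1) 0.
Proof.
  intros H. apply cpt_eps. intros eps Heps.
  destruct (hf1 _ _ _ H 0 eps Heps) as [d Hd].
  exists d. split; [apply cond_pos|]. intros y Hy.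
  unfold K1. destruct (Rle_dec 0 0); [|lra].
  destruct (Rle_dec y 0). { unfold Rminus; rewrite Rplus_opp_r, Rabs_R0; auto. }
  specialize (Hd y ltac:(lra)). rewrite Rminus_0_r in Hy. specialize (Hd Hy).
  rewrite Rplus_0_l, (hf0 _ _ _ H), Rminus_0_r in Hd. exact Hd.
Qed.

Lemma K2_cont0 f f1 f2 : HY f f1 f2 -> continuity_pt (K2 f f1 f2) 0.
Proof.
  intros H. apply cpt_eps. intros eps Heps.
  destruct (cpt_eps' _ _ (hf2c _ _ _ H 0) (2*eps) ltac:(lra)) as [d [Hd Hy]].
  exists d. split; [auto|]. intros y Hy'.
  unfold K2. destruct (Rle_dec 0 0); [|lra].
  destruct (Rle_dec y 0). { unfold Rminus; rewrite Rplus_opp_r, Rabs_R0; auto. }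
  destruct (taylor2 _ _ _ H y ltac:(lra)) as [z [Hz1 Hz2]].
  rewrite Hz2. replace (f2 z * (y * y) / 2 / (y * y) - f2 0 / 2) with ((f2 z - f2 0)/2)
    by (field; lra).
  rewrite Rminus_0_r in Hy'. rewrite Rabs_right in Hy' by lra.
  assert (Rabs (z - 0) < d) by (rewrite Rminus_0_r, Rabs_right; lra).
  specialize (Hy z H0). unfold Rdiv. rewrite Rabs_mult, (Rabs_right (/2)) by lra. lra.
Qed.

Lemma K_cont_pos f f1 f2 : HY f f1 f2 -> forall z, 0 < z ->
  continuity_pt (K1 f f1) z /\ continuity_pt (K2 f f1 f2) z.
Proof.
  intros H z Hz. split.
  - apply continuity_pt_locally_ext with (a := z) (f := fun u => f u / u); auto.
    + intros y Hy. unfold K1. destruct (Rle_dec y 0); auto.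
      unfold Rdist in Hy. apply Rabs_def2 in Hy. lra.
    + apply continuity_pt_div; [apply (f_cont _ _ _ H)| apply derivable_continuous_pt, derivable_pt_id| lra].
  - apply continuity_pt_locally_ext with (a := z) (f := fun u => (f u - f1 0 * u) / (u * u)); auto.
    + intros y Hy. unfold K2. destruct (Rle_dec y 0); auto.
      unfold Rdist in Hy. apply Rabs_def2 in Hy. lra.
    + apply continuity_pt_div.
      * apply continuity_pt_minus; [apply (f_cont _ _ _ H)|].
        apply continuity_pt_mult; [apply continuity_pt_const; intros ? ?; auto|apply derivable_continuous_pt, derivable_pt_id].
      * apply continuity_pt_mult; apply derivable_continuous_pt, derivable_pt_id.
      * intro Hc. apply Rmult_integral in Hc. lra.
Qed.

Lemma K_cont_neg f f1 f2 : forall z, z < 0 ->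
  continuity_pt (K1 f f1) z /\ continuity_pt (K2 f f1 f2) z.
Proof.
  intros z Hz. split.
  - apply continuity_pt_locally_ext with (a := -z) (f := fun _ => f1 0); [lra| |apply continuity_pt_const; intros ? ?; auto].
    intros y Hy. unfold K1. destruct (Rle_dec y 0); auto.
    unfold Rdist in Hy. apply Rabs_def2 in Hy. lra.
  - apply continuity_pt_locally_ext with (a := -z) (f := fun _ => f2 0 / 2); [lra| |apply continuity_pt_const; intros ? ?; auto].
    intros y Hy. unfold K2. destruct (Rle_dec y 0); auto.
    unfold Rdist in Hy. apply Rabs_def2 in Hy. lra.
Qed.

Definition Gd f (z : R) := 0 < z -> below_xstar f z.

Lemma gt_cont f f1 f2 : HY f f1 f2 -> forall z, Gd f z -> continuity_pt (gt f f1 f2) z.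
Proof.
  intros H z Hz. pose proof (ha _ _ _ H) as Ha.
  assert (HK : continuity_pt (K1 f f1) z /\ continuity_pt (K2 f f1 f2) z /\ K1 f f1 z <> 0).
  { destruct (Rtotal_order z 0) as [Hn|[H0|Hp]].
    - destruct (K_cont_neg f f1 f2 z Hn). repeat split; auto. unfold K1.
      destruct (Rle_dec z 0); lra.
    - subst. repeat split; [apply (K1_cont0 _ _ _ H)|apply (K2_cont0 _ _ _ H)|].
      unfold K1. destruct (Rle_dec 0 0); lra.
    - destruct (K_cont_pos _ _ _ H z Hp). repeat split; auto. unfold K1.
      destruct (Rle_dec z 0); [lra|]. pose proof (D_pos _ _ _ H z (Hz Hp)).
      assert (0 < f z / z) by (apply Rdiv_lt_0_compat; lra). lra. }
  destruct HK as [C1 [C2 Nz]]. unfold gt.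
  apply continuity_pt_div.
  - apply continuity_pt_opp; auto.
  - apply continuity_pt_mult; [apply continuity_pt_const; intros ? ?; auto|auto].
  - intro Hc. apply Rmult_integral in Hc. lra.
Qed.

Lemma gt_val f f1 f2 : HY f f1 f2 -> forall u, 0 < u -> f u <> 0 ->
  gt f f1 f2 u = 1 / f u - 1 / (f1 0 * u).
Proof.
  intros H u Hu Hf. pose proof (ha _ _ _ H). unfold gt, K1, K2.
  destruct (Rle_dec u 0); [lra|]. field. repeat split; lra.
Qed.

Lemma gt_nonneg f f1 f2 : HY f f1 f2 -> forall u, below_xstar f u -> 0 <= gt f f1 f2 u.
Proof.
  intros H u Hu. pose proof (D_pos _ _ _ H u Hu). pose proof (ha _ _ _ H).
  pose proof (f_le _ _ _ H u (proj1 Hu)).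
  rewrite (gt_val _ _ _ H u (proj1 Hu)) by lra.
  assert (1 / (f1 0 * u) <= 1 / f u).
  { apply Rmult_le_reg_l with (f u * (f1 0 * u)).
    apply Rmult_lt_0_compat; [lra| apply Rmult_lt_0_compat; [lra|apply Hu]].
    field_simplify; try lra. pose proof (proj1 Hu). split; lra. }
  lra.
Qed.

Lemma Gd_D f x : below_xstar f x -> Gd f x.
Proof. intros H _; auto. Qed.

Lemma Gd_np f x : x <= 0 -> Gd f x.
Proof. intros H Hx; lra. Qed.

Lemma Gd_interval f x y z : Gd f x -> Gd f y -> x <= z <= y -> Gd f z.
Proof. intros Hx Hy Hz Hz0. apply D_down with y. apply Hy; lra. lra. Qed.

Lemma Gd_open f f1 f2 : HY f f1 f2 -> forall z, Gd f z ->
  exists e, 0 < e /\ forall w, Rabs (w - z) < e -> Gd f w.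
Proof.
  intros H z Hz. destruct (Rle_lt_dec z 0) as [Hn|Hp].
  - destruct (D_small _ _ _ H) as [d [Hd Hu]].
    exists (d/2 - z). split; [lra|]. intros w Hw Hw0. apply Rabs_def2 in Hw.
    apply Hu. lra.
  - destruct (D_open _ _ _ H z (Hz Hp)) as [e [He He']].
    exists (Rmin e z). split; [apply Rmin_glb_lt; lra|]. intros w Hw Hw0.
    apply Rabs_def2 in Hw. pose proof (Rmin_l e z).
    apply D_down with (z + e); auto. lra.
Qed.

Definition J f f1 f2 (x : R) := RInt (gt f f1 f2) 0 x.

Lemma J_ex f f1 f2 : HY f f1 f2 -> forall u v, Gd f u -> Gd f v -> ex_RInt (gt f f1 f2) u v.
Proof.
  intros H u v Hu Hv. apply (@ex_RInt_continuous R_CompleteNormedModule). intros z Hz.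
  apply continuity_pt_filterlim. apply (gt_cont _ _ _ H).
  destruct (Rle_dec u v).
  - rewrite Rmin_left, Rmax_right in Hz by lra. apply Gd_interval with u v; auto.
  - rewrite Rmin_right, Rmax_left in Hz by lra. apply Gd_interval with v u; auto.
Qed.

Lemma chasles g u v w : ex_RInt g u v -> ex_RInt g v w -> RInt g u v + RInt g v w = RInt g u w.
Proof. intros H1 H2. rewrite <- (RInt_Chasles g u v w H1 H2). reflexivity. Qed.

Lemma J_der f f1 f2 : HY f f1 f2 -> forall z, Gd f z ->
  derivable_pt_lim (J f f1 f2) z (gt f f1 f2 z).
Proof.
  intros H z Hz. apply is_derive_Reals. unfold J.
  apply (is_derive_RInt (V := R_CompleteNormedModule) _ _ 0).
  - destruct (Gd_open _ _ _ H z Hz) as [e [He Hw]].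
    exists (mkposreal e He). intros y Hy. apply RInt_correct.
    apply (J_ex _ _ _ H); [apply Gd_np; lra|]. apply Hw. exact Hy.
  - apply continuity_pt_filterlim. apply (gt_cont _ _ _ H z Hz).
Qed.

Lemma J0 f f1 f2 : J f f1 f2 0 = 0.
Proof. unfold J. rewrite RInt_point. reflexivity. Qed.

Definition G f f1 f2 (x : R) := J f f1 f2 x + ln x / f1 0.

Lemma G_der f f1 f2 : HY f f1 f2 -> forall x, below_xstar f x ->
  derivable_pt_lim (G f f1 f2) x (1 / f x).
Proof.
  intros H x Hx. pose proof (ha _ _ _ H). pose proof (D_pos _ _ _ H x Hx).
  pose proof (proj1 Hx).
  replace (1 / f x) with (gt f f1 f2 x + / x / f1 0).
  2: { rewrite (gt_val _ _ _ H x) by lra. field. lra. }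
  apply (derivable_pt_lim_plus (J f f1 f2) (fun x => ln x / f1 0)).
  - apply (J_der _ _ _ H). apply Gd_D; auto.
  - apply is_derive_Reals. auto_derive. auto. field. lra.
Qed.

Lemma G_cont f f1 f2 : HY f f1 f2 -> forall x, below_xstar f x -> continuity_pt (G f f1 f2) x.
Proof.
  intros H x Hx. apply derivable_continuous_pt. exists (1 / f x). apply (G_der _ _ _ H x Hx).
Qed.

Lemma G_incr f f1 f2 : HY f f1 f2 -> forall x y, below_xstar f x -> below_xstar f y -> x < y ->
  G f f1 f2 x < G f f1 f2 y.
Proof.
  intros H x y Hx Hy Hxy.
  destruct (MVT_cor2 (G f f1 f2) (fun u => 1 / f u) x y Hxy) as [c [Hc1 Hc2]].
  { intros c Hc. apply (G_der _ _ _ H). apply D_down with y; auto. pose proof (proj1 Hx). lra. }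
  assert (Dc : below_xstar f c) by (apply D_down with y; auto; pose proof (proj1 Hx); lra).
  pose proof (D_pos _ _ _ H c Dc).
  assert (0 < 1 / f c) by (apply Rdiv_lt_0_compat; lra).
  assert (0 < 1 / f c * (y - x)) by (apply Rmult_lt_0_compat; lra). lra.
Qed.

Lemma J_mono f f1 f2 : HY f f1 f2 -> forall x y, below_xstar f x -> below_xstar f y -> x <= y ->
  J f f1 f2 x <= J f f1 f2 y.
Proof.
  intros H x y Hx Hy Hxy. destruct (Rle_lt_or_eq_dec _ _ Hxy) as [Hlt| ->]; [|lra].
  destruct (MVT_cor2 (J f f1 f2) (gt f f1 f2) x y Hlt) as [c [Hc1 Hc2]].
  { intros c Hc. apply (J_der _ _ _ H). intros _. apply D_down with y; auto. pose proof (proj1 Hx). lra. }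
  assert (Dc : below_xstar f c) by (apply D_down with y; auto; pose proof (proj1 Hx); lra).
  pose proof (gt_nonneg _ _ _ H c Dc).
  assert (0 <= gt f f1 f2 c * (y - x)) by (apply Rmult_le_pos; lra). lra.
Qed.

Lemma J_lim0 f f1 f2 : HY f f1 f2 -> forall eps, 0 < eps -> exists d, 0 < d /\
  forall e, 0 < e < d -> below_xstar f e /\ Rabs (J f f1 f2 e) < eps.
Proof.
  intros H eps Heps.
  assert (C : continuity_pt (J f f1 f2) 0).
  { apply derivable_continuous_pt. exists (gt f f1 f2 0). apply (J_der _ _ _ H). apply Gd_np; lra. }
  destruct (cpt_eps' _ _ C eps Heps) as [d1 [Hd1 Hy]].
  destruct (D_small _ _ _ H) as [d2 [Hd2 Hu]].
  exists (Rmin d1 d2). split; [apply Rmin_glb_lt; auto|]. intros e He.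
  pose proof (Rmin_l d1 d2). pose proof (Rmin_r d1 d2). split.
  - apply Hu; lra.
  - rewrite <- (Rminus_0_r (J f f1 f2 e)), <- (J0 f f1 f2). apply Hy.
    rewrite Rminus_0_r, Rabs_right; lra.
Qed.

Lemma G_improper f f1 f2 : HY f f1 f2 -> forall x, below_xstar f x ->
  improper_int0 (fun u => 1 / f u - 1 / (f1 0 * u)) x (G f f1 f2 x - ln x / f1 0).
Proof.
  intros H x Hx eps Heps. destruct (J_lim0 _ _ _ H eps Heps) as [d [Hd Hs]].
  pose proof (proj1 Hx).
  exists (Rmin d x). split; [apply Rmin_glb_lt; auto|]. intros e He.
  pose proof (Rmin_l d x). pose proof (Rmin_r d x).
  destruct (Hs e ltac:(lra)) as [De Je].
  assert (Eq : forall u, Rmin e x < u < Rmax e x -> gt f f1 f2 u = 1 / f u - 1 / (f1 0 * u)).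
  { intros u Hu. rewrite Rmin_left, Rmax_right in Hu by lra.
    apply (gt_val _ _ _ H). lra. apply Rgt_not_eq, (D_pos _ _ _ H). apply D_down with x; auto; lra. }
  assert (Ex : ex_RInt (gt f f1 f2) e x) by (apply (J_ex _ _ _ H); apply Gd_D; auto).
  exists (ex_RInt_Reals_0 _ _ _ (ex_RInt_ext _ _ _ _ Eq Ex)).
  rewrite <- RInt_Reals. rewrite <- (RInt_ext _ _ _ _ Eq).
  assert (Ex0 : ex_RInt (gt f f1 f2) 0 e) by (apply (J_ex _ _ _ H); [apply Gd_np; lra| apply Gd_D; auto]).
  pose proof (chasles _ _ _ _ Ex0 Ex). unfold G, J in *.
  replace (RInt (gt f f1 f2) e x - (RInt (gt f f1 f2) 0 x + ln x / f1 0 - ln x / f1 0))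
    with (- RInt (gt f f1 f2) 0 e) by lra.
  rewrite Rabs_Ropp. exact Je.
Qed.

Lemma G_low f f1 f2 : HY f f1 f2 -> forall z, exists x, below_xstar f x /\ G f f1 f2 x < z.
Proof.
  intros H z. pose proof (ha _ _ _ H) as Ha. destruct (J_lim0 _ _ _ H 1 Rlt_0_1) as [d [Hd Hs]].
  set (w := exp (f1 0 * (z - 1))). assert (0 < w) by apply exp_pos.
  set (x := Rmin (d/2) (w/2)). assert (x <= d/2) by apply Rmin_l. assert (x <= w/2) by apply Rmin_r.
  assert (Hx : 0 < x) by (apply Rmin_glb_lt; lra).
  destruct (Hs x ltac:(lra)) as [Dx Jx]. exists x. split; auto.
  assert (ln x < f1 0 * (z - 1)).
  { rewrite <- (ln_exp (f1 0 * (z-1))). apply ln_increasing; auto. fold w. lra. }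
  assert (ln x / f1 0 < z - 1).
  { apply Rmult_lt_reg_r with (f1 0); auto. unfold Rdiv. rewrite Rmult_assoc, Rinv_l by lra. lra. }
  apply Rabs_def2 in Jx. unfold G. lra.
Qed.

Lemma M_bound f f1 f2 : HY f f1 f2 -> exists M, 0 <= M /\ forall x, 0 <= x -> Rabs (f2 x) <= M.
Proof.
  intros H. destruct (hM _ _ _ H) as [M HM]. exists M. split; auto.
  specialize (HM 0 (Rle_refl 0)). pose proof (Rabs_pos (f2 0)). lra.
Qed.

Lemma f1_lower f f1 f2 : HY f f1 f2 -> forall M, (forall x, 0 <= x -> Rabs (f2 x) <= M) ->
  forall x, 0 <= x -> f1 0 - M * x <= f1 x.
Proof.
  intros H M HM x Hx. destruct (Rle_lt_or_eq_dec _ _ Hx) as [Hp| <-]; [| assert (0 <= M) by (specialize (HM 0 (Rle_refl 0)); pose proof (Rabs_pos (f2 0)); lra); lra].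
  destruct (MVT_cor2 f1 f2 0 x Hp) as [c [Hc1 Hc2]].
  { intros c _. apply (hf2 _ _ _ H). }
  specialize (HM c ltac:(lra)). apply Rabs_le_between in HM.
  assert (- M * x <= f2 c * x) by (apply Rmult_le_compat_r; lra). lra.
Qed.

Lemma G_high f f1 f2 : HY f f1 f2 -> forall z, exists x, below_xstar f x /\ z < G f f1 f2 x.
Proof.
  intros H z. pose proof (ha _ _ _ H) as Ha.
  destruct (D_small _ _ _ H) as [d [Hd Hsm]].
  set (p0 := d/2). assert (Dp0 : below_xstar f p0) by (apply Hsm; unfold p0; lra).
  destruct (classic (forall x, 0 < x -> below_xstar f x)) as [All|Ex].
  - set (w := exp (f1 0 * (z - J f f1 f2 p0)) + 1). assert (0 < exp (f1 0 * (z - J f f1 f2 p0))) by apply exp_pos.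
    set (x := Rmax p0 w). assert (p0 <= x) by apply Rmax_l. assert (w <= x) by apply Rmax_r.
    assert (Dx : below_xstar f x) by (apply All; unfold p0 in *; lra).
    exists x. split; auto.
    pose proof (J_mono _ _ _ H p0 x Dp0 Dx ltac:(lra)).
    assert (f1 0 * (z - J f f1 f2 p0) < ln x).
    { rewrite <- (ln_exp (f1 0 * (z - J f f1 f2 p0))). apply ln_increasing; auto. unfold w in *; lra. }
    assert (z - J f f1 f2 p0 < ln x / f1 0).
    { apply Rmult_lt_reg_r with (f1 0); auto. unfold Rdiv. rewrite Rmult_assoc, Rinv_l by lra. lra. }
    unfold G. lra.
  - apply not_all_ex_not in Ex. destruct Ex as [x0 Hx0].
    apply imply_to_and in Hx0. destruct Hx0 as [Hx0 NDx0].
    set (E := fun y => below_xstar f y).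
    assert (Eb : bound E).
    { exists x0. intros y Ey. destruct (Rle_lt_dec y x0); auto. exfalso. apply NDx0.
      apply D_down with y; auto; lra. }
    destruct (completeness E Eb (ex_intro _ p0 Dp0)) as [s [Hub Hlub]].
    assert (Hin : forall y, 0 < y < s -> below_xstar f y).
    { intros y Hy. apply NNPP. intro Ny. assert (s <= y); [|lra].
      apply Hlub. intros w Ew. destruct (Rle_lt_dec w y); auto. exfalso. apply Ny.
      apply D_down with w; auto; lra. }
    assert (Hps : p0 < s).
    { destruct (D_open _ _ _ H p0 Dp0) as [e [He De]]. pose proof (Hub _ De). lra. }
    assert (Hfs : f s <= 0).
    { destruct (Rle_lt_dec (f s) 0) as [|Hp]; auto. exfalso.
      assert (Ds : below_xstar f s).
      { split; [unfold p0 in *; lra|]. intros u Hu. destruct (Rle_lt_or_eq_dec _ _ (proj2 Hu)) as [Hl| ->].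
        - apply Rgt_not_eq, (D_pos _ _ _ H), Hin. lra.
        - lra. }
      destruct (D_open _ _ _ H s Ds) as [e [He De]]. pose proof (Hub _ De). lra. }
    destruct (M_bound _ _ _ H) as [M [HM0 HM]].
    set (K := M * s + 1). assert (HK : 0 < K) by (unfold K; assert (0 <= M * s) by (apply Rmult_le_pos; unfold p0 in *; lra); lra).
    assert (Hfu : forall u, p0 <= u < s -> f u <= K * (s - u)).
    { intros u Hu. destruct (MVT_cor2 f f1 u s (proj2 Hu)) as [c [Hc1 Hc2]].
      { intros c _. apply (hf1 _ _ _ H). }
      pose proof (f1_lower _ _ _ H M HM c ltac:(unfold p0 in *; lra)).
      assert (M * c <= M * s) by (apply Rmult_le_compat_l; lra).
      assert ((f1 0 - M * c) * (s - u) <= f1 c * (s - u)) by (apply Rmult_le_compat_r; lra).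
      assert (0 <= f1 0 * (s - u)) by (apply Rmult_le_pos; lra).
      unfold K. nra. }
    set (h := fun u => G f f1 f2 u + ln (s - u) / K).
    assert (Hh : forall x, p0 <= x < s -> h p0 <= h x).
    { intros x Hx. destruct (Rle_lt_or_eq_dec _ _ (proj1 Hx)) as [Hl| <-]; [|lra].
      destruct (MVT_cor2 h (fun u => 1 / f u - 1 / (K * (s - u))) p0 x Hl) as [c [Hc1 Hc2]].
      { intros c Hc. unfold h.
        apply (derivable_pt_lim_plus (G f f1 f2) (fun u => ln (s - u) / K)).
        - apply (G_der _ _ _ H). apply Hin. unfold p0 in *; lra.
        - apply is_derive_Reals. auto_derive. lra. field. lra. }
      assert (Dc : below_xstar f c) by (apply Hin; unfold p0 in *; lra).
      pose proof (D_pos _ _ _ H c Dc). pose proof (Hfu c ltac:(lra)).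
      assert (1 / (K * (s - c)) <= 1 / f c).
      { apply Rmult_le_reg_l with (f c * (K * (s - c))).
        apply Rmult_lt_0_compat; [lra| apply Rmult_lt_0_compat; lra].
        field_simplify; try lra; try (split; lra). }
      assert (0 <= (1 / f c - 1 / (K * (s - c))) * (x - p0)) by (apply Rmult_le_pos; lra). lra. }
    set (c := h p0).
    set (w := exp (K * (c - z))). assert (0 < w) by apply exp_pos.
    set (del := Rmin ((s - p0)/2) (w/2)). assert (del <= (s-p0)/2) by apply Rmin_l. assert (del <= w/2) by apply Rmin_r.
    assert (Hdel : 0 < del) by (apply Rmin_glb_lt; lra).
    set (x := s - del). exists x.
    assert (Dx : below_xstar f x) by (apply Hin; unfold x, p0 in *; lra).
    split; auto.
    pose proof (Hh x ltac:(unfold x; lra)) as Hhx. fold c in Hhx.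
    assert (ln del < K * (c - z)).
    { rewrite <- (ln_exp (K * (c - z))). apply ln_increasing; auto. fold w. lra. }
    assert (ln del / K < c - z).
    { apply Rmult_lt_reg_r with K; auto. unfold Rdiv. rewrite Rmult_assoc, Rinv_l by lra. lra. }
    unfold h in Hhx. replace (s - x) with del in Hhx by (unfold x; ring). lra.
Qed.

Lemma G_surj f f1 f2 : HY f f1 f2 -> forall z, exists x, below_xstar f x /\ G f f1 f2 x = z.
Proof.
  intros H z. destruct (G_low _ _ _ H z) as [x1 [D1 G1]]. destruct (G_high _ _ _ H z) as [x2 [D2 G2]].
  assert (x1 < x2).
  { destruct (Rlt_le_dec x1 x2) as [|Hle]; auto. destruct (Rle_lt_or_eq_dec _ _ Hle) as [Hl| ->].
    - pose proof (G_incr _ _ _ H x2 x1 D2 D1 Hl). lra.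
    - lra. }
  destruct (Ranalysis5.IVT_interv (fun x => G f f1 f2 x - z) x1 x2) as [x [Hx1 Hx2]]; auto.
  - intros a0 Ha0. apply continuity_pt_minus; [|apply continuity_pt_const; intros ? ?; auto].
    apply (G_cont _ _ _ H). apply D_down with x2; auto. pose proof (proj1 D1). lra.
  - lra.
  - lra.
  - exists x. split; [apply D_down with x2; auto; pose proof (proj1 D1); lra | lra].
Qed.

Lemma cont_ind (P : R -> Prop) : P 0 ->
  (forall T, 0 < T -> (forall t, 0 <= t < T -> P t) -> P T) ->
  (forall T, 0 <= T -> (forall t, 0 <= t <= T -> P t) ->
     exists d, 0 < d /\ forall t, T < t < T + d -> P t) ->
  forall t, 0 <= t -> P t.
Proof.
  intros P0 Hcl Hext t0 Ht0. apply NNPP. intro NP.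
  set (E := fun T => 0 <= T /\ forall t, 0 <= t <= T -> P t).
  assert (Eb : bound E).
  { exists t0. intros T [HT HP]. destruct (Rle_lt_dec T t0); auto. exfalso. apply NP, HP. lra. }
  assert (E0 : E 0).
  { split; [lra|]. intros t Ht. replace t with 0 by lra. auto. }
  destruct (completeness E Eb (ex_intro _ 0 E0)) as [S [Hub Hlub]].
  assert (HS0 : 0 <= S) by (apply Hub; auto).
  assert (Hbelow : forall t, 0 <= t < S -> P t).
  { intros t Ht. apply NNPP. intro Nt. assert (S <= t); [|lra].
    apply Hlub. intros T [HT HP]. destruct (Rle_lt_dec T t); auto. exfalso. apply Nt, HP. lra. }
  assert (PS : P S).
  { destruct (Rle_lt_or_eq_dec _ _ HS0) as [Hp| <-]; auto. }
  assert (ES : forall t, 0 <= t <= S -> P t).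
  { intros t Ht. destruct (Rle_lt_or_eq_dec _ _ (proj2 Ht)) as [Hl| ->]; auto. apply Hbelow; lra. }
  destruct (Hext S HS0 ES) as [d [Hd Hd']].
  assert (E (S + d/2)).
  { split; [lra|]. intros t Ht. destruct (Rle_lt_dec t S); [apply ES; lra| apply Hd'; lra]. }
  pose proof (Hub _ H). lra.
Qed.

Lemma small_eq0 r : (forall eps, 0 < eps -> Rabs r < eps) -> r = 0.
Proof.
  intros H. destruct (Req_dec r 0) as [|Hn]; auto. exfalso.
  pose proof (Rabs_pos_lt r Hn). specialize (H _ H0). lra.
Qed.

Lemma const_right (h : R -> R) a b : a < b ->
  (forall eps, 0 < eps -> exists d, 0 < d /\ forall s, a <= s < a + d -> Rabs (h s - h a) < eps) ->
  (forall x, a < x < b -> derivable_pt_lim h x 0) ->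
  forall x, a < x < b -> h x = h a.
Proof.
  intros Hab Hc Hd x Hx. apply Rminus_diag_uniq. apply small_eq0. intros eps Heps.
  destruct (Hc eps Heps) as [d [Hd0 Hs]].
  set (s := a + Rmin d (x - a) / 2).
  assert (Hm1 : Rmin d (x - a) <= d) by apply Rmin_l.
  assert (Hm2 : Rmin d (x - a) <= x - a) by apply Rmin_r.
  assert (Hm0 : 0 < Rmin d (x - a)) by (apply Rmin_glb_lt; lra).
  assert (Hsx : s < x) by (unfold s; lra).
  destruct (MVT_cor2 h (fun _ => 0) s x Hsx) as [c [Hc1 _]].
  { intros c Hc0. apply Hd. unfold s in *; lra. }
  replace (h x - h a) with (h s - h a) by lra. apply Hs. unfold s; lra.
Qed.


Lemma flow_G f f1 f2 phi : HY f f1 f2 -> is_flow f phi -> forall y, below_xstar f y ->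
  forall t, 0 <= t -> below_xstar f (phi t y) /\ G f f1 f2 (phi t y) = G f f1 f2 y + t.
Proof.
  intros H Hphi y Dy. pose proof (proj1 Dy) as Hy0.
  destruct (Hphi y (Rlt_le _ _ Hy0)) as [P0 [Prc Pd]].
  set (p := fun s => phi s y).
  change (forall t, 0 <= t -> below_xstar f (p t) /\ G f f1 f2 (p t) = G f f1 f2 y + t).
  assert (Pc : forall T, 0 < T -> continuity_pt p T).
  { intros T HT. apply derivable_continuous_pt. exists (f (p T)). apply Pd; auto. }
  assert (Hrc : forall T, 0 <= T -> forall eps, 0 < eps -> exists d, 0 < d /\
            forall s, T <= s < T + d -> Rabs (p s - p T) < eps).
  { intros T HT eps Heps. destruct (Rle_lt_or_eq_dec _ _ HT) as [Hp| <-].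
    - destruct (cpt_eps' _ _ (Pc T Hp) eps Heps) as [d [Hd Hs]].
      exists d; split; auto. intros s Hs'. apply Hs. apply Rabs_def1; lra.
    - destruct (Prc eps Heps) as [d [Hd Hs]]. exists d; split; auto.
      intros s Hs'. unfold p. rewrite P0. apply Hs. lra. }
  assert (Hlc : forall T, 0 < T -> forall eps, 0 < eps -> exists d, 0 < d /\ d <= T /\
            forall s, T - d < s <= T -> Rabs (p s - p T) < eps).
  { intros T HT eps Heps. destruct (cpt_eps' _ _ (Pc T HT) eps Heps) as [d [Hd Hs]].
    exists (Rmin d T). split; [apply Rmin_glb_lt; auto|]. split; [apply Rmin_r|].
    intros s Hs'. apply Hs. pose proof (Rmin_l d T). apply Rabs_def1; lra. }
  apply cont_ind.
  - unfold p. rewrite P0. split; auto. ring.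
  - intros T HT Hb.
    destruct (G_surj _ _ _ H (G f f1 f2 y + T + 1)) as [w [Dw Gw]].
    assert (Hbd : forall t, 0 <= t < T -> y <= p t <= w).
    { intros t Ht. destruct (Hb t Ht) as [Dt Gt]. split.
      - destruct (Rle_lt_dec y (p t)) as [|Hl]; auto.
        pose proof (G_incr _ _ _ H _ _ Dt Dy Hl). lra.
      - destruct (Rle_lt_dec (p t) w) as [|Hl]; auto.
        pose proof (G_incr _ _ _ H _ _ Dw Dt Hl). lra. }
    assert (HpT : y <= p T <= w).
    { split.
      - destruct (Rle_lt_dec y (p T)) as [|Hl]; auto. exfalso.
        destruct (Hlc T HT (y - p T) ltac:(lra)) as [d [Hd [HdT Hs]]].
        specialize (Hs (T - d/2) ltac:(lra)). specialize (Hbd (T - d/2) ltac:(lra)).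
        apply Rabs_def2 in Hs. lra.
      - destruct (Rle_lt_dec (p T) w) as [|Hl]; auto. exfalso.
        destruct (Hlc T HT (p T - w) ltac:(lra)) as [d [Hd [HdT Hs]]].
        specialize (Hs (T - d/2) ltac:(lra)). specialize (Hbd (T - d/2) ltac:(lra)).
        apply Rabs_def2 in Hs. lra. }
    assert (DT : below_xstar f (p T)) by (apply D_down with w; auto; lra).
    split; auto.
    set (q := fun s => G f f1 f2 (p s) - s).
    assert (Cq : continuity_pt q T).
    { unfold q. apply continuity_pt_minus.
      - apply (continuity_pt_comp p (G f f1 f2)); auto. apply (G_cont _ _ _ H _ DT).
      - apply derivable_continuous_pt, derivable_pt_id. }
    assert (G f f1 f2 (p T) - (G f f1 f2 y + T) = 0); [|lra].
    apply small_eq0. intros eps Heps.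
    destruct (cpt_eps' _ _ Cq eps Heps) as [d [Hd Hs]].
    set (s := T - Rmin d T / 2).
    assert (Hm1 : Rmin d T <= d) by apply Rmin_l. assert (Hm2 : Rmin d T <= T) by apply Rmin_r.
    assert (Hm0 : 0 < Rmin d T) by (apply Rmin_glb_lt; lra).
    specialize (Hs s ltac:(unfold s; apply Rabs_def1; lra)).
    destruct (Hb s ltac:(unfold s; lra)) as [_ Gs].
    unfold q in Hs. rewrite Gs in Hs.
    replace (G f f1 f2 (p T) - (G f f1 f2 y + T)) with (- (G f f1 f2 y + s - s - (G f f1 f2 (p T) - T))) by ring.
    rewrite Rabs_Ropp. exact Hs.
  - intros T HT Hb. destruct (Hb T ltac:(lra)) as [DT GT].
    pose proof (proj1 DT) as HpT0.
    destruct (D_open _ _ _ H _ DT) as [e0 [He0 De0]].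
    set (e := Rmin e0 (p T)).
    assert (He1 : e <= e0) by apply Rmin_l. assert (He2 : e <= p T) by apply Rmin_r.
    assert (He : 0 < e) by (apply Rmin_glb_lt; lra).
    assert (Dnear : forall w, Rabs (w - p T) < e -> below_xstar f w).
    { intros w Hw. apply Rabs_def2 in Hw. apply D_down with (p T + e0); auto. lra. }
    destruct (Hrc T HT e He) as [d [Hd Hs]].
    exists d. split; auto.
    set (q := fun s => G f f1 f2 (p s) - s).
    assert (Hq : forall t, T < t < T + d -> q t = q T).
    { apply const_right; [lra| |].
      - intros eps Heps.
        destruct (cpt_eps' _ _ (G_cont _ _ _ H _ DT) (eps/2) ltac:(lra)) as [d1 [Hd1 Hs1]].
        destruct (Hrc T HT d1 Hd1) as [d2 [Hd2 Hs2]].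
        exists (Rmin d2 (eps/2)). split; [apply Rmin_glb_lt; lra|].
        intros s Hs'. pose proof (Rmin_l d2 (eps/2)). pose proof (Rmin_r d2 (eps/2)).
        specialize (Hs1 (p s) (Hs2 s ltac:(lra))). unfold q.
        apply Rabs_def2 in Hs1. apply Rabs_def1; lra.
      - intros x Hx. unfold q.
        assert (Dx : below_xstar f (p x)) by (apply Dnear, Hs; lra).
        pose proof (D_pos _ _ _ H _ Dx).
        replace 0 with (1 / f (p x) * f (p x) - 1) by (field; lra).
        apply (derivable_pt_lim_minus (fun s => G f f1 f2 (p s)) id).
        + apply (derivable_pt_lim_comp p (G f f1 f2)).
          * apply Pd; lra.
          * apply (G_der _ _ _ H _ Dx).
        + apply derivable_pt_lim_id. }
    intros t Ht. split.
    + apply Dnear, Hs; lra.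
    + specialize (Hq t Ht). unfold q in Hq. lra.
Qed.

Lemma G_ln f f1 f2 : HY f f1 f2 -> forall u v, below_xstar f u -> below_xstar f v -> u <= v ->
  ln v - ln u <= f1 0 * (G f f1 f2 v - G f f1 f2 u).
Proof.
  intros H u v Du Dv Huv. pose proof (J_mono _ _ _ H u v Du Dv Huv). pose proof (ha _ _ _ H).
  unfold G. replace (f1 0 * (J f f1 f2 v + ln v / f1 0 - (J f f1 f2 u + ln u / f1 0)))
    with (f1 0 * (J f f1 f2 v - J f f1 f2 u) + (ln v - ln u)) by (field; lra).
  assert (0 <= f1 0 * (J f f1 f2 v - J f f1 f2 u)) by (apply Rmult_le_pos; lra). lra.
Qed.

Theorem proposition1
  (f f1 f2 : R -> R) (phi : R -> R -> R)
  (Hf1 : forall x, derivable_pt_lim f x (f1 x))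
  (Hf2 : forall x, derivable_pt_lim f1 x (f2 x))
  (Hf2c : continuity f2)
  (Hf2b : exists M, forall x, 0 <= x -> Rabs (f2 x) <= M)
  (Hf0 : f 0 = 0)
  (Ha : 0 < f1 0)
  (Hmon : forall x y, 0 <= x -> 0 <= y ->
            (y - x) * (f y - f x) <= f1 0 * (y - x) ^ 2)
  (Hphi : is_flow f phi) :
  let a := f1 0 in
  exists G : R -> R,
    (forall x, below_xstar f x ->
       improper_int0 (fun u => 1 / f u - 1 / (a * u)) x (G x - ln x / a)) /\
    (forall x, below_xstar f x -> continuity_pt G x) /\
    (forall x y, below_xstar f x -> below_xstar f y -> x < y -> G x < G y) /\
    (forall z, exists x, below_xstar f x /\ G x = z) /\
    exists H : R -> R,
      (forall x, 0 < x -> below_xstar f (H x) /\ G (H x) = ln x / a) /\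
      (forall c d, 0 < c -> c <= d ->
         forall eps, 0 < eps -> exists T, forall t, T <= t ->
           forall x, c <= x <= d ->
             Rabs (phi t (x * exp (- a * t)) - H x) < eps).
Proof.
  intros a. assert (HY0 : HY f f1 f2) by (constructor; auto).
  exists (G f f1 f2). split; [|split; [|split; [|split]]].
  - intros x Dx. apply (G_improper _ _ _ HY0 x Dx).
  - apply (G_cont _ _ _ HY0).
  - apply (G_incr _ _ _ HY0).
  - apply (G_surj _ _ _ HY0).
  - set (Ginv := fun z => proj1_sig (constructive_indefinite_description _ (G_surj _ _ _ HY0 z))).
    assert (HGinv : forall z, below_xstar f (Ginv z) /\ G f f1 f2 (Ginv z) = z).
    { intros z. unfold Ginv. apply (proj2_sig (constructive_indefinite_description _ (G_surj _ _ _ HY0 z))). }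
    exists (fun x => Ginv (ln x / a)). split.
    { intros x _. apply HGinv. }
    intros c d Hc Hcd eps Heps.
    set (q := Ginv (ln d / a)). destruct (HGinv (ln d / a)) as [Dq Gq]. fold q in Dq, Gq.
    pose proof (proj1 Dq) as Hq0.
    set (kap := 1 + eps / q). assert (Hkap : 1 < kap) by (unfold kap; assert (0 < eps / q) by (apply Rdiv_lt_0_compat; lra); lra).
    set (eta := ln kap / a). assert (Heta : 0 < eta).
    { unfold eta. apply Rdiv_lt_0_compat; [|unfold a; lra]. rewrite <- ln_1. apply ln_increasing; lra. }
    destruct (J_lim0 _ _ _ HY0 eta Heta) as [del [Hdel Hsm]].
    exists (Rmax 0 ((ln d - ln del) / a + 1)).
    intros t Ht x Hx.
    assert (Ht0 : 0 <= t) by (pose proof (Rmax_l 0 ((ln d - ln del) / a + 1)); lra).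
    assert (Ht1 : (ln d - ln del) / a + 1 <= t) by (pose proof (Rmax_r 0 ((ln d - ln del) / a + 1)); lra).
    assert (Hat : ln d - ln del < a * t).
    { assert (a * ((ln d - ln del) / a + 1) <= a * t) by (apply Rmult_le_compat_l; unfold a in *; lra).
      replace (a * ((ln d - ln del) / a + 1)) with (ln d - ln del + a) in H by (field; unfold a; lra).
      unfold a in *; lra. }
    set (y := x * exp (- a * t)).
    assert (Hd0 : 0 < d) by lra.
    assert (Hexp : exp (- a * t) < del / d).
    { replace (del / d) with (exp (ln del - ln d)).
      - apply exp_increasing. lra.
      - rewrite <- ln_div by lra. apply exp_ln. apply Rdiv_lt_0_compat; lra. }
    assert (He0 : 0 < exp (- a * t)) by apply exp_pos.
    assert (Hy0 : 0 < y) by (unfold y; apply Rmult_lt_0_compat; lra).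
    assert (Hyd : y < del).
    { unfold y. apply Rle_lt_trans with (d * exp (- a * t)).
      - apply Rmult_le_compat_r; lra.
      - replace del with (d * (del / d)) by (field; lra). apply Rmult_lt_compat_l; lra. }
    destruct (Hsm y ltac:(lra)) as [Dy Jy].
    destruct (flow_G _ _ _ _ HY0 Hphi y Dy t Ht0) as [Dp Gp].
    fold y. set (p := phi t y) in *.
    set (r := Ginv (ln x / a)). destruct (HGinv (ln x / a)) as [Dr Gr]. fold r in Dr, Gr.
    assert (Hlny : ln y = ln x - a * t).
    { unfold y. rewrite ln_mult by lra. rewrite ln_exp. ring. }
    assert (HGy : G f f1 f2 y = J f f1 f2 y + ln x / a - t).
    { unfold G. fold a. rewrite Hlny. field. unfold a; lra. }
    assert (Hdiff : G f f1 f2 p - G f f1 f2 r = J f f1 f2 y) by lra.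
    assert (Hrq : r <= q).
    { destruct (Rle_lt_dec r q) as [|Hl]; auto. exfalso.
      pose proof (G_incr _ _ _ HY0 q r Dq Dr Hl).
      assert (ln x <= ln d) by (apply ln_le; lra).
      assert (ln x / a <= ln d / a).
      { unfold Rdiv. apply Rmult_le_compat_r; auto. left. apply Rinv_0_lt_compat. unfold a; lra. }
      lra. }
    pose proof (proj1 Dr) as Hr0. pose proof (proj1 Dp) as Hp0.
    set (u := eps / q). assert (Hu : u * q = eps) by (unfold u; field; lra).
    assert (Hu0 : 0 < u) by (unfold u; apply Rdiv_lt_0_compat; lra).
    assert (Hkap' : kap = 1 + u) by reflexivity.
    assert (Haeta : a * eta = ln kap) by (unfold eta; field; unfold a; lra).
    apply Rabs_def2 in Jy.
    destruct (Rlt_le_dec (Rabs (p - r)) eps) as [|Hge]; auto. exfalso.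
    destruct (Rle_lt_dec r p) as [Hrp|Hpr].
    + rewrite Rabs_right in Hge by lra.
      assert (r * kap <= p) by (rewrite Hkap'; assert (r * u <= q * u) by (apply Rmult_le_compat_r; lra); lra).
      assert (ln (r * kap) <= ln p) by (apply ln_le; [apply Rmult_lt_0_compat|]; lra).
      rewrite ln_mult in H0 by lra.
      pose proof (G_ln _ _ _ HY0 r p Dr Dp Hrp). fold a in H1.
      assert (a * (G f f1 f2 p - G f f1 f2 r) < a * eta) by (apply Rmult_lt_compat_l; unfold a; lra).
      lra.
    + rewrite Rabs_left in Hge by lra.
      assert (p * kap <= r) by (rewrite Hkap'; assert (p * u <= q * u) by (apply Rmult_le_compat_r; lra); lra).
      assert (ln (p * kap) <= ln r) by (apply ln_le; [apply Rmult_lt_0_compat|]; lra).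
      rewrite ln_mult in H0 by lra.
      pose proof (G_ln _ _ _ HY0 p r Dp Dr (Rlt_le _ _ Hpr)). fold a in H1.
      assert (a * (G f f1 f2 r - G f f1 f2 p) < a * eta) by (apply Rmult_lt_compat_l; unfold a; lra).
      lra.
Qed.
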